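(* For every real $r\ge1$ and every $x\in[0,1]$, \[ \sum_{m\ge0}s_m(x)^r\ \ge\ \sum_{m\ge0}s_m(\tfrac12)^r, \] where $s_m(\tfrac12)=\frac{8}{\pi^2(2m+1)^2}$.
   Context: For $y\in\mathbb{R}$ let $\operatorname{sinc}(y)=\frac{\sin y}{y}$ for $y\neq0$ and $\operatorname{sinc}(0)=1$, and let $h(y)=\operatorname{sinc}^2(\pi y)$. For integers $m\ge0$, $s_m(x)=h(x+m)+h(x-(m+1))$. *)

(* Defs.v *)
From HB Require Import structures.
From mathcomp Require Import all_boot all_order all_algebra.
From mathcomp Require Import all_classical all_reals all_analysis.
Set Implicit Arguments. Unset Strict Implicit. Unset Printing Implicit Defensive.
Import Order.TTheory GRing.Theory Num.Theory.
Local Open Scope ring_scope.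

Definition sinc_fn {R : realType} (y : R) : R := if y == 0 then 1 else sin y / y.

Definition h_fn {R : realType} (y : R) : R := (sinc_fn (pi * y)) ^+ 2.

Definition s_fn {R : realType} (m : nat) (x : R) : R :=
  h_fn (x + m%:R) + h_fn (x - (m%:R + 1)).

(* Main.v *)
Require Import Defs.
From HB Require Import structures.
From mathcomp Require Import all_boot all_order all_algebra.
From mathcomp Require Import all_classical all_reals all_analysis.
From mathcomp Require Import ring lra.
Import Order.TTheory GRing.Theory Num.Theory.
Local Open Scope ring_scope.

Lemma series_le (R: realType) (u v : nat -> R) : (forall n, 0 <= u n) -> (forall n, 0 <= v n) ->
  (forall N, \sum_(0 <= k < N) u k <= \sum_(0 <= k < N) v k) ->
  (\sum_(0 <= k <oo) (u k)%:E <= \sum_(0 <= k <oo) (v k)%:E)%E.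
Proof.
move=> u0 v0 uv.
apply: lee_lim.
- by apply: is_cvg_nneseries => n _ _; rewrite lee_fin.
- by apply: is_cvg_nneseries => n _ _; rewrite lee_fin.
- by apply: nearW => N /=; rewrite !sumEFin lee_fin.
Qed.


Section Trig.
Variable R : realType.

Definition F0 : R -> R := (@id R) - (@sin R).
Definition F1 : R -> R := (@cos R) - cst 1 + cst (2^-1) * ((@id R) * (@id R)).
Definition F2 : R -> R := (@sin R) - (@id R) + cst (6^-1) * ((@id R) * (@id R) * (@id R)).

Lemma dF0 (s : R) : is_derive s (1:R) F0 (1 - cos s).
Proof. by rewrite /F0; apply: is_derive_eq. Qed.

Lemma dF1 (s : R) : is_derive s (1:R) F1 (s - sin s).
Proof.
rewrite /F1; apply: is_derive_eq.
rewrite scaler0 addr0 subr0 /cst -scalerDl.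
rewrite [X in _ + X = _](_ : _ = s); first by rewrite addrC.
rewrite -[_ *: _]/(2^-1 * ((s + s) * 1)). lra.
Qed.

Lemma dF2 (s : R) : is_derive s (1:R) F2 (cos s - 1 + s ^+ 2 / 2).
Proof.
rewrite /F2; apply: is_derive_eq.
rewrite scaler0 addr0 /cst.
rewrite -[6^-1 *: _]/(6^-1 * ((s*s)*1 + s*((s*1)+(s*1)))).
by field.
Qed.

Lemma ndecr_from (F : R -> R) (dF : R -> R) (t : R) :
  (forall s, is_derive s (1:R) F (dF s)) -> (forall s, 0 <= s -> 0 <= dF s) -> 0 <= t ->
  F 0 <= F t.
Proof.
move=> df pos t0.
apply: (@ger0_derive1_ndecr _ F 0 t) => //.
- move=> s; rewrite in_itv /= => /andP[s0 _].
  by rewrite derive1E (@derive_val _ _ _ _ _ _ _ (df s)) pos // ltW.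
- apply: derivable_within_continuous => s _; exact: (@ex_derive _ _ _ _ _ _ _ (df s)).
Qed.

Lemma sin_le_id (t : R) : 0 <= t -> sin t <= t.
Proof.
move=> t0; have := @ndecr_from F0 (fun s => 1 - cos s) t dF0 _ t0.
rewrite -[F0 0]/(0 - sin 0) -[F0 t]/(t - sin t) sin0 subr0 subr_ge0; apply => s _.
by rewrite subr_ge0 cos_le1.
Qed.

Lemma cos_ge_poly (t : R) : 0 <= t -> 1 - t ^+ 2 / 2 <= cos t.
Proof.
move=> t0; have := @ndecr_from F1 (fun s => s - sin s) t dF1 _ t0.
rewrite -[F1 0]/(cos 0 - 1 + 2^-1 * (0 * 0)) -[F1 t]/(cos t - 1 + 2^-1 * (t * t)) cos0 subrr mul0r mulr0 addr0.
have H : forall s : R, 0 <= s -> 0 <= s - sin s by move=> s s0; rewrite subr_ge0 sin_le_id.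
move=> /(_ H) H2. 
rewrite expr2. lra.
Qed.

Lemma sin_ge_poly (t : R) : 0 <= t -> t - t ^+ 3 / 6 <= sin t.
Proof.
move=> t0; have := @ndecr_from F2 (fun s => cos s - 1 + s ^+ 2 / 2) t dF2 _ t0.
rewrite -[F2 0]/(sin 0 - 0 + 6^-1 * (0 * 0 * 0)) -[F2 t]/(sin t - t + 6^-1 * (t * t * t)).
rewrite sin0 !mul0r mulr0 !addr0 subr0.
have H : forall s : R, 0 <= s -> 0 <= cos s - 1 + s ^+ 2 / 2.
  by move=> s s0; have := @cos_ge_poly s s0; lra.
move=> /(_ H) H2.
have -> : t ^+ 3 = t * t * t by rewrite !exprS expr0 mulr1 mulrA.
lra.
Qed.

Lemma sin2_bounds (t : R) : `|t| <= 2 ->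
  t ^+ 2 * (1 - t ^+ 2 / 6) ^+ 2 <= sin t ^+ 2 <= t ^+ 2.
Proof.
wlog t0 : t / 0 <= t.
  move=> H; have [t0|t0] := leP 0 t; first exact: H.
  move=> t2; have := H (- t); rewrite sinN !sqrrN; apply; last by rewrite normrN.
  by rewrite oppr_ge0 ltW.
rewrite ger0_norm // => t2.
have s0 : 0 <= sin t.
  apply: sin_ge0_pi; rewrite t0 /=; apply: (le_trans t2); apply: pi_ge2.
have h1 := @sin_le_id t t0.
have h2 := @sin_ge_poly t t0.
have e3 : t ^+ 3 / 6 = t * (t ^+ 2 / 6) by rewrite exprS mulrA.
have ef : t - t ^+ 3 / 6 = t * (1 - t ^+ 2 / 6) by rewrite e3; ring.
have q0 : 0 <= t - t ^+ 3 / 6.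
  rewrite ef mulr_ge0 //; have : t ^+ 2 <= 2 ^+ 2 by rewrite ler_sqr // nnegrE.
  lra.
apply/andP; split.
  have -> : t ^+ 2 * (1 - t ^+ 2 / 6) ^+ 2 = (t - t ^+ 3 / 6) ^+ 2.
    by rewrite ef exprMn.
  by rewrite ler_sqr // nnegrE.
by rewrite ler_sqr // nnegrE.
Qed.

Lemma invsin2_bounds (t : R) : t != 0 -> `|t| <= 2 ->
  sin t != 0 /\ (t ^+ 2)^-1 <= (sin t ^+ 2)^-1 <= (t ^+ 2)^-1 + 2.
Proof.
move=> tn0 t2; have /andP[lo hi] := @sin2_bounds t t2.
have tt : 0 < t ^+ 2 by rewrite lt_def sqrf_eq0 tn0 sqr_ge0.
have t4 : t ^+ 2 <= 4.
  have : `|t| ^+ 2 <= 2 ^+ 2 by rewrite ler_sqr // nnegrE.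
  by rewrite real_normK ?num_real //; lra.
set y := t ^+ 2 in tt t4 lo hi *.
have q : 0 < (1 - y / 6) ^+ 2.
  rewrite exprn_gt0 //; lra.
have yq : 0 < y * (1 - y / 6) ^+ 2 by rewrite mulr_gt0.
have s2 : 0 < sin t ^+ 2 by apply: lt_le_trans lo.
split.
  by apply/eqP => s0; move: s2; rewrite s0 expr0n ltxx.
apply/andP; split.
  by rewrite lef_pV2 // posrE.
apply: le_trans (_ : (y * (1 - y / 6) ^+ 2)^-1 <= _).
  by rewrite lef_pV2 // posrE.
rewrite -div1r ler_pdivrMr // mulrDl mulrA mulVf ?gt_eqF // mul1r.
have : 0 <= y * ((4 - y) * (15 - 2 * y)).
  by apply: mulr_ge0; [lra | apply: mulr_ge0; lra].
rewrite !exprS expr0 !mulr1 => *.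
nra.
Qed.
End Trig.


Section Fin.
Variable R : realType.

Lemma sin2x (z : R) : sin (2 * z) = 2 * sin z * cos z.
Proof. rewrite mulr_natl sin_mulr2n; ring. Qed.

Lemma sin_double_nz (n : nat) (z : R) : sin (2 ^+ n * z) != 0 -> sin z != 0.
Proof.
elim: n z => [|n IH] z; first by rewrite expr0 mul1r.
rewrite exprSr -mulrA => /IH; rewrite sin2x !mulf_eq0 !negb_or.
by case/andP => /andP[].
Qed.

Lemma sin_addnpi (b : R) (i : nat) : sin (b + i%:R * pi) = (-1) ^+ i * sin b.
Proof. by rewrite mulr_natl (alternatingn (@sinDpi R)). Qed.

Lemma dup_id (a : R) : sin (2 * a) != 0 ->
  (sin a ^+ 2)^-1 + (sin (a + pi / 2) ^+ 2)^-1 = 4 / sin (2 * a) ^+ 2.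
Proof.
rewrite sinDpihalf sin2x => h.
move: (h); rewrite !mulf_eq0 !negb_or => /andP[/andP[_ sa] ca].
have -> : (sin a ^+ 2)^-1 + (cos a ^+ 2)^-1 = (cos a ^+ 2 + sin a ^+ 2) / (sin a ^+ 2 * cos a ^+ 2).
  by field; rewrite ca sa.
by rewrite cos2Dsin2; field; rewrite ca sa.
Qed.
Lemma finid (n : nat) : forall th : R, sin (2 ^+ n * th) != 0 ->
  \sum_(j < 2 ^ n) (sin (th + j%:R * pi / 2 ^+ n) ^+ 2)^-1 = 4 ^+ n / sin (2 ^+ n * th) ^+ 2.
Proof.
have p2 : forall k, (2:R) ^+ k != 0 by move=> k; rewrite expf_neq0 // pnatr_eq0.
elim: n => [|n IH] th h.
  by rewrite big_ord1 !expr0 /= !mul0r addr0 !mul1r.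
have -> : (2 ^ n.+1 = 2 ^ n + 2 ^ n)%N by rewrite expnS mul2n addnn.
rewrite big_split_ord /= -big_split /=.
have h2 : sin (2 ^+ n * (2 * th)) != 0 by rewrite mulrA -exprSr.
rewrite (eq_bigr (fun j : 'I_(2^n) => 4 * (sin (2 * th + (j : nat)%:R * pi / 2 ^+ n) ^+ 2)^-1)).
  by rewrite -mulr_sumr IH // mulrA -exprS mulrA -exprSr.
move=> j _.
set a := th + (j : nat)%:R * pi / 2 ^+ n.+1.
have e1 : th + (2 ^ n + j)%:R * pi / 2 ^+ n.+1 = a + pi / 2.
  rewrite /a natrD natrX exprS; by field; rewrite p2.
have e2 : 2 * th + (j : nat)%:R * pi / 2 ^+ n = 2 * a.
  by rewrite /a exprS; field; rewrite p2.
rewrite e2 -dup_id; first by congr (_ + (sin _ ^+ 2)^-1); exact: e1.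
apply: (@sin_double_nz n).
have e3 : 2 ^+ n * (2 * a) = 2 ^+ n.+1 * th + (j : nat)%:R * pi.
  by rewrite /a exprS; field; rewrite p2.
by rewrite e3 sin_addnpi mulf_neq0 // expf_neq0 // oppr_eq0 oner_eq0.
Qed.

End Fin.


Section S5.
Variable R : realType.

Lemma pi_neq0 : (pi : R) != 0. Proof. by rewrite gt_eqF // pi_gt0. Qed.

Lemma h_val (y : R) : y != 0 -> h_fn y = sin (pi * y) ^+ 2 / (pi ^+ 2 * y ^+ 2).
Proof.
move=> y0; rewrite /h_fn /sinc_fn mulf_eq0 (negbTE pi_neq0) (negbTE y0) /=.
by rewrite expr_div_n exprMn.
Qed.

Lemma sin2_shift (a : R) (k : nat) : sin (a + k%:R * pi) ^+ 2 = sin a ^+ 2.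
Proof. by rewrite sin_addnpi exprMn -exprM mulnC exprM sqrrN !expr1n mul1r. Qed.

Lemma s_val (m : nat) (x : R) : 0 < x < 1 ->
  s_fn m x = sin (pi * x) ^+ 2 / pi ^+ 2 * ((x + m%:R) ^+ 2)^-1
           + sin (pi * x) ^+ 2 / pi ^+ 2 * ((x - (m%:R + 1)) ^+ 2)^-1.
Proof.
case/andP => x0 x1.
have y1 : x + m%:R != 0 by rewrite gt_eqF // ltr_wpDr.
have y2 : x - (m%:R + 1) != 0.
  by rewrite lt_eqF // subr_lt0 ltr_wpDl.
rewrite /s_fn !h_val //.
have e1 : sin (pi * (x + m%:R)) ^+ 2 = sin (pi * x) ^+ 2.
  by rewrite mulrDr (mulrC pi (m%:R)) sin2_shift.
have e2 : sin (pi * (x - (m%:R + 1))) ^+ 2 = sin (pi * x) ^+ 2.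
  rewrite -(sin2_shift _ m.+1); congr (sin _ ^+ 2).
  by rewrite -natr1; ring.
rewrite e1 e2 !invfM; congr (_ + _); rewrite !mulrA //.
Qed.

Lemma term_bound (y K : R) : 0 < K -> y != 0 -> `|y| * 2 <= K ->
  (pi ^+ 2 * y ^+ 2)^-1 <= (K ^+ 2)^-1 * (sin (pi * y / K) ^+ 2)^-1 <=
  (pi ^+ 2 * y ^+ 2)^-1 + 2 / K ^+ 2.
Proof.
move=> K0 y0 yK.
have pi0 := @pi_gt0 R.
have t0 : pi * y / K != 0 by rewrite !mulf_eq0 !negb_or invr_eq0 y0 (gt_eqF pi0) (gt_eqF K0).
have t2 : `|pi * y / K| <= 2.
  rewrite normrM normrM normfV (gtr0_norm pi0) (gtr0_norm K0).
  have pi4 : pi < 4 :> R by have := pihalf_lt2 R; lra.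
  have ny := normr_ge0 y.
  rewrite ler_pdivrMr //; nra.
have [_ /andP[lo hi]] := @invsin2_bounds R _ t0 t2.
have K2 : 0 < (K ^+ 2)^-1 by rewrite invr_gt0 exprn_gt0.
have e : (K ^+ 2)^-1 * ((pi * y / K) ^+ 2)^-1 = (pi ^+ 2 * y ^+ 2)^-1.
  move: (gt_eqF pi0); generalize (@pi R) => p p0.
  by field; rewrite y0 p0 (gt_eqF K0).
apply/andP; split.
  by rewrite -e ler_pM2l.
have := hi; rewrite -(ler_pM2l K2) mulrDr e => H.
by rewrite (mulrC 2).
Qed.

Lemma lin_aux (c a1 a2 u1 u2 e : R) : 0 <= c <= 1 -> a1 <= u1 <= a1 + e ->
  a2 <= u2 <= a2 + e -> 0 <= e ->
  c * (a1 + a2) <= c * (u1 + u2) <= c * (a1 + a2) + 2 * e.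
Proof.
move=> /andP[c0 c1] /andP[h1 h2] /andP[h3 h4] e0.
apply/andP; split; first by rewrite ler_wpM2l // lerD.
apply: (le_trans (y := c * (a1 + a2 + 2 * e))).
  by rewrite ler_wpM2l //; lra.
rewrite mulrDr lerD2l; have : 0 <= 2 * e by lra.
by move=> h; rewrite -{2}(mul1r (2 * e)) ler_wpM2r.
Qed.

Lemma alg2 (q : R) : q != 0 -> q * (4 / (2 * q) ^+ 2) = q^-1.
Proof. by move=> q0; field; rewrite q0. Qed.

Lemma alg1 (p a b K : R) : K != 0 -> p * a / K + b * p / K = p * (a + b) / K.
Proof. by move=> K0; field. Qed.

Lemma window (x : R) (n : nat) : 0 < x < 1 ->
  \sum_(m < 2 ^ n) s_fn m x <= 1 <= \sum_(m < 2 ^ n) s_fn m x + (2 ^+ n)^-1.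
Proof.
move=> hx; have /andP[x0 x1] := hx.
have pi0 := @pi_gt0 R.
pose K : R := 2 ^+ n.+1.
have K0 : 0 < K by rewrite exprn_gt0.
have Kn : K != 0 by rewrite gt_eqF.
have sx : 0 < sin (pi * x).
  apply: sin_gt0_pi; rewrite mulr_gt0 //= -{2}(mulr1 pi) ltr_pM2l //.
have eK : 2 ^+ n.+1 * (pi * x / K) = pi * x by rewrite -/K; field.
have F := @finid R n.+1 (pi * x / K).
rewrite eK in F; have {F} := F (lt0r_neq0 sx).
have -> : (2 ^ n.+1 = 2 ^ n + 2 ^ n)%N by rewrite expnS mul2n addnn.
rewrite big_split_ord /= -/K.
rewrite [X in _ + X = _](reindex_inj rev_ord_inj) /= -big_split /=.
pose G1 (m : nat) := (sin (pi * (x + m%:R) / K) ^+ 2)^-1.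
pose G2 (m : nat) := (sin (pi * (x - (m%:R + 1)) / K) ^+ 2)^-1.
rewrite (eq_bigr (fun j : 'I_(2^n) => G1 j + G2 j)); last first.
  move=> j _; congr (_ + _).
    by rewrite /G1 -/K alg1.
  rewrite /G2 -/K.
  have ej : ((2 ^ n + (2 ^ n - j.+1))%:R : R) = K - ((j : nat)%:R + 1).
    rewrite natrD natrB ?(ltn_ord j) // natrX /K exprS -natr1; ring.
  have ea : pi * x / K + (K - ((j : nat)%:R + 1)) * pi / K
          = pi * (x - ((j : nat)%:R + 1)) / K + 1%:R * pi by field.
  by rewrite ej ea sin2_shift.
move=> SUM.
pose c := sin (pi * x) ^+ 2.
have c01 : 0 <= c <= 1.
  rewrite sqr_ge0 /= /c -(expr1n _ 2%N) ler_sqr ?nnegrE ?sin_le1 //; exact: ltW.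
have tb : forall m : 'I_(2 ^ n), s_fn m x <= c / K ^+ 2 * (G1 m + G2 m)
                                 <= s_fn m x + 4 / K ^+ 2.
  move=> [m /= mlt].
  have hm : (m%:R + 1 : R) <= 2 ^+ n.
    by rewrite natr1 -natrX ler_nat.
  have y1n : x + m%:R != 0 by rewrite gt_eqF // ltr_wpDr.
  have y2n : x - (m%:R + 1) != 0 by rewrite lt_eqF // subr_lt0 ltr_wpDl.
  have y1K : `|x + m%:R| * 2 <= K.
    rewrite gtr0_norm ?ltr_wpDr // /K exprSr ler_pM2r //.
    by apply: le_trans hm; lra.
  have y2K : `|x - (m%:R + 1)| * 2 <= K.
    rewrite ltr0_norm ?subr_lt0 ?ltr_wpDl // /K exprSr ler_pM2r //.
    by apply: le_trans hm; lra.
  have T1 := term_bound _ _ K0 y1n y1K.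
  have T2 := term_bound _ _ K0 y2n y2K.
  have e0 : 0 <= 2 / K ^+ 2 by rewrite divr_ge0 // ltW // exprn_gt0.
  have := lin_aux _ _ _ _ _ _ c01 T1 T2 e0.
  rewrite (s_val m x hx) -/c.
  have -> : c / pi ^+ 2 * ((x + m%:R) ^+ 2)^-1 + c / pi ^+ 2 * ((x - (m%:R + 1)) ^+ 2)^-1
     = c * ((pi ^+ 2 * (x + m%:R) ^+ 2)^-1 + (pi ^+ 2 * (x - (m%:R + 1)) ^+ 2)^-1).
    by rewrite !invfM; ring.
  have -> : c / K ^+ 2 * (G1 m + G2 m) = c * ((K ^+ 2)^-1 * G1 m + (K ^+ 2)^-1 * G2 m).
    by ring.
  by have -> : 4 / K ^+ 2 = 2 * (2 / K ^+ 2) by ring.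
have lo : \sum_(m < 2 ^ n) s_fn m x <= c / K ^+ 2 * \sum_(i < 2 ^ n) (G1 i + G2 i).
  by rewrite mulr_sumr; apply: ler_sum => m _; case/andP: (tb m).
have hi : c / K ^+ 2 * \sum_(i < 2 ^ n) (G1 i + G2 i) <= \sum_(m < 2 ^ n) s_fn m x + (2 ^+ n)^-1.
  rewrite mulr_sumr; apply: le_trans (ler_sum _ (fun m _ => (andP (tb m)).2)) _.
  rewrite big_split /= sumr_const card_ord.
  have -> : (4 / K ^+ 2) *+ 2 ^ n = (2 ^+ n)^-1.
    have e : ((2 ^ n)%:R : R) = 2 ^+ n by rewrite natrX.
    rewrite /K -mulr_natl e (exprS _ n).
    by rewrite alg2 // expf_neq0 // pnatr_eq0.
  by [].
have one : c / K ^+ 2 * \sum_(i < 2 ^ n) (G1 i + G2 i) = 1.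
  rewrite SUM /K -/c.
  have c0 : c != 0 by rewrite /c sqrf_eq0 gt_eqF.
  have h4 : (4 : R) = 2 ^+ 2 by rewrite expr2; lra.
  have -> : (4 : R) ^+ n.+1 = (2 ^+ n.+1) ^+ 2 by rewrite h4 -!exprM mulnC.
  by field; rewrite c0 /=.
apply/andP; split; [by rewrite -one | by rewrite -[X in X <= _]one].
Qed.
End S5.


Section S6.
Variable R : realType.

Lemma poly_am (c k u : R) : 3 / 2 <= k -> `|u| < k -> c <= 1 - 4 / 3 * u ^+ 2 ->
  c * (((k + u) ^+ 2)^-1 + ((k - u) ^+ 2)^-1) <= 2 / k ^+ 2.
Proof.
move=> k32 uk hc.
have k0 : 0 < k by lra.
have /andP[u1 u2] : - k < u < k by rewrite -ltr_norml.
have kp : 0 < k + u by lra.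
have km : 0 < k - u by lra.
have D0 : 0 < (k + u) ^+ 2 * (k - u) ^+ 2 * k ^+ 2 by rewrite !mulr_gt0 // exprn_gt0.
have id : 2 / k ^+ 2 - c * (((k + u) ^+ 2)^-1 + ((k - u) ^+ 2)^-1)
   = (2 * (k + u) ^+ 2 * (k - u) ^+ 2 - c * ((k - u) ^+ 2 + (k + u) ^+ 2) * k ^+ 2)
     / ((k + u) ^+ 2 * (k - u) ^+ 2 * k ^+ 2).
  by field; rewrite !gt_eqF.
rewrite -subr_ge0 id; apply: divr_ge0; last exact: ltW D0; rewrite subr_ge0.

apply: (le_trans (y := (1 - 4 / 3 * u ^+ 2) * ((k - u) ^+ 2 + (k + u) ^+ 2) * k ^+ 2)).
  apply: ler_wpM2r; first exact: sqr_ge0.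
  by apply: ler_wpM2r => //; rewrite addr_ge0 ?sqr_ge0.
have k2 : 9 / 4 <= k ^+ 2.
  have : (3/2) ^+ 2 <= k ^+ 2 by rewrite ler_sqr ?nnegrE //; lra.
  by rewrite expr2; lra.
have H1 : 0 <= u ^+ 2 * k ^+ 2 * (k ^+ 2 - 9 / 4).
  by apply: mulr_ge0; [apply: mulr_ge0; apply: sqr_ge0 | rewrite subr_ge0].
have H2 : 0 <= u ^+ 2 * u ^+ 2 * k ^+ 2.
  by apply: mulr_ge0; [apply: mulr_ge0; apply: sqr_ge0 | apply: sqr_ge0].
have H3 : 0 <= u ^+ 2 * u ^+ 2 by apply: mulr_ge0; apply: sqr_ge0.
move: H1 H2 H3; rewrite !expr2 => H1 H2 H3.
nra.
Qed.

Lemma sin2_le (x : R) : 0 < x < 1 -> sin (pi * x) ^+ 2 <= 1 - 4 / 3 * (x - 2^-1) ^+ 2.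
Proof.
case/andP => x0 x1.
set u := x - 2^-1.
have pi2 := pi_ge2 R.
have pi4 : pi < 4 :> R by have := pihalf_lt2 R; lra.
have ex : pi * x = pi * u + pi / 2 by rewrite /u; field.
rewrite ex sinDpihalf cos2sin2.
have u2 : `|pi * u| <= 2.
  rewrite normrM (ger0_norm (pi_ge0 R)).
  have : `|u| <= 2^-1 by rewrite ler_norml /u; apply/andP; split; lra.
  have := normr_ge0 u; nra.
have /andP[lo _] := @sin2_bounds R _ u2.
rewrite lerD2l lerN2; apply: le_trans lo.
rewrite exprMn.
set P := (@pi R) ^+ 2.
have P4 : 4 <= P by rewrite /P expr2; nra.
have P16 : P <= 16 by rewrite /P expr2; nra.
have uu : u ^+ 2 <= 4^-1.
  have : `|u| <= 2^-1 by rewrite ler_norml /u; apply/andP; split; lra.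
  have := normr_ge0 u; rewrite -[u ^+ 2]real_normK ?num_real // expr2; nra.
set v := P * u ^+ 2.
have vP : v <= P / 4 by rewrite /v; have := sqr_ge0 u; nra.
have w0 : 1 - P / 24 <= 1 - v / 6 by lra.
have w1 : 0 <= 1 - P / 24 by lra.
have ww : (1 - P / 24) ^+ 2 <= (1 - v / 6) ^+ 2 by rewrite ler_sqr ?nnegrE //; lra.
have key : 4 / 3 <= P * (1 - P / 24) ^+ 2.
  have H : 0 <= (16 - P) * (192 - (16 - P) ^+ 2).
    apply: mulr_ge0; first lra.
    rewrite subr_ge0 expr2; nra.
  move: H; rewrite !expr2 => H; nra.
have key2 : 4 / 3 <= P * (1 - v / 6) ^+ 2.
  by apply: le_trans key _; rewrite ler_pM2l //; lra.
have -> : v * (1 - v / 6) ^+ 2 = u ^+ 2 * (P * (1 - v / 6) ^+ 2) by rewrite {1}/v; ring.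
by rewrite [4 / 3 * _]mulrC; apply: ler_wpM2l => //; exact: sqr_ge0.
Qed.

Lemma am_le_bm (m : nat) (x : R) : (1 <= m)%N -> 0 < x < 1 -> s_fn m x <= s_fn m (2^-1).
Proof.
move=> m1 hx; have /andP[x0 x1] := hx.
have h2 : 0 < (2^-1 : R) < 1 by apply/andP; split; lra.
rewrite (@s_val R m x hx) (@s_val R m _ h2).
rewrite sin_pihalf expr1n.
set k : R := m%:R + 2^-1.
set u : R := x - 2^-1.
have m1' : 1 <= (m%:R : R) by rewrite ler1n.
have k32 : 3 / 2 <= k by rewrite /k; lra.
have uk : `|u| < k by rewrite ltr_norml /u /k; apply/andP; split; lra.
have ea : (x + m%:R) = k + u by rewrite /k /u; field.
have eb : (x - (m%:R + 1)) ^+ 2 = (k - u) ^+ 2 by rewrite /k /u; field.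
have ec : (2^-1 + m%:R) = k by rewrite /k; field.
have ed : (2^-1 - (m%:R + 1)) ^+ 2 = k ^+ 2 by rewrite /k; field.
rewrite ea eb ec ed.
have P := poly_am _ _ _ k32 uk (sin2_le x hx).
rewrite -!mulrDr mulrAC [1 / _ * _]mulrAC mul1r.
apply: ler_wpM2r; first by rewrite invr_ge0 sqr_ge0.
apply: (le_trans P); rewrite -[(k ^+ 2)^-1]mul1r -mulrDl -[1 + 1]/(2 : R).
by rewrite mul1r.
Qed.
End S6.


Section S7.
Variable R : realType.

Lemma s_ge0 (m : nat) (x : R) : 0 <= s_fn m x.
Proof. by rewrite /s_fn /h_fn addr_ge0 ?sqr_ge0. Qed.

Lemma alg3 (p q : R) : p != 0 -> q != 0 ->
  1 / p ^+ 2 / (q / 2) ^+ 2 + 1 / p ^+ 2 / (q / 2) ^+ 2 = 8 / (p ^+ 2 * q ^+ 2).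
Proof. by move=> p0 q0; field; rewrite p0 q0. Qed.

Lemma s_half (m : nat) : s_fn m (2^-1 : R) = 8 / (pi ^+ 2 * (2 * m%:R + 1) ^+ 2).
Proof.
have h2 : 0 < (2^-1 : R) < 1 by apply/andP; split; lra.
rewrite (@s_val R m _ h2) sin_pihalf expr1n.
have p0 := @pi_neq0 R.
have m0 : (2 * m%:R + 1 : R) != 0 by rewrite gt_eqF //; have := ler0n R m; lra.
have e1 : (2^-1 + m%:R : R) = (2 * m%:R + 1) / 2 by field.
have e2 : (2^-1 - (m%:R + 1) : R) = - ((2 * m%:R + 1) / 2) by field.
rewrite e1 e2 sqrrN.
by rewrite alg3.
Qed.

Lemma h_zero (z : R) : z != 0 -> sin (pi * z) = 0 -> h_fn z = 0.
Proof.
move=> z0 s0; rewrite /h_fn /sinc_fn mulf_eq0 (negbTE (@pi_neq0 R)) (negbTE z0) /=.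
by rewrite s0 mul0r expr0n.
Qed.

Lemma sin_pin (n : nat) : sin (pi * n%:R) = 0 :> R.
Proof. by rewrite -[pi * _]add0r mulrC sin_addnpi sin0 mulr0. Qed.

Lemma h_nat (n : nat) : h_fn (n%:R : R) = (n == 0)%:R.
Proof.
case: n => [|n].
  by rewrite /h_fn /sinc_fn mulr0 eqxx expr1n.
by rewrite h_zero ?pnatr_eq0 // sin_pin.
Qed.

Lemma h_neg (z : R) : h_fn (- z) = h_fn z.
Proof.
rewrite /h_fn /sinc_fn mulrN oppr_eq0; case: ifP => // _.
by rewrite sinN invrN mulrNN.
Qed.

Lemma s_end (x : R) (m : nat) : x = 0 \/ x = 1 -> s_fn m x = (m == 0)%:R.
Proof.
rewrite /s_fn; case => ->.
  by rewrite add0r sub0r h_neg natr1 (h_nat m) (h_nat m.+1) /= addr0.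
have e : (1 - (m%:R + 1) : R) = - m%:R by ring.
rewrite e [1 + _]addrC natr1 (h_nat m.+1) h_neg (h_nat m) /=.
by rewrite add0r.
Qed.

Definition Asum (x : R) (N : nat) := \sum_(0 <= m < N) s_fn m x.

Lemma Asum_split (x : R) {N M : nat} : (N <= M)%N ->
  Asum x M = Asum x N + \sum_(N <= m < M) s_fn m x.
Proof. by move=> NM; rewrite /Asum (@big_cat_nat _ _ _ N) //. Qed.

Lemma Asum_mono (x : R) {N M : nat} : (N <= M)%N -> Asum x N <= Asum x M.
Proof.
move=> NM; rewrite (Asum_split x NM) lerDl.
by apply: sumr_ge0 => m _; apply: s_ge0.
Qed.

Lemma Asum_pow (x : R) (n : nat) : Asum x (2 ^ n) = \sum_(m < 2 ^ n) s_fn m x.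
Proof. by rewrite /Asum big_mkord. Qed.

Lemma Asum_le1 {x : R} (N : nat) : 0 < x < 1 -> Asum x N <= 1.
Proof.
move=> hx; apply: (le_trans (Asum_mono x (ltnW (ltn_expl N (ltnSn 1))))).
by rewrite Asum_pow; case/andP: (@window R x N hx).
Qed.

Lemma Asum_end {x : R} {N : nat} : x = 0 \/ x = 1 -> (0 < N)%N -> Asum x N = 1.
Proof.
move=> hx; case: N => // N _.
rewrite /Asum big_nat_recl // (s_end x 0 hx) /= big1_seq ?addr0 // => m _.
by rewrite (s_end x m.+1 hx).
Qed.

Lemma Asum_ge (x : R) (N : nat) : 0 <= x <= 1 -> Asum (2^-1) N <= Asum x N.
Proof.
have h2 : 0 < (2^-1 : R) < 1 by apply/andP; split; lra.
case: N => [_|N]; first by rewrite /Asum !big_geq.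
case/andP => x0 x1.
have [xe|xe] : (x = 0 \/ x = 1) \/ (0 < x < 1).
  case: (ltrP 0 x) => h; last by left; left; apply/eqP; rewrite eq_le h x0.
  case: (ltrP x 1) => h'; last by left; right; apply/eqP; rewrite eq_le x1 h'.
  by right; apply/andP.
  by rewrite (Asum_end xe) // (Asum_le1 _ h2).
apply/ler_addgt0Pr => e e0.
have [k hk] : exists k : nat, e^-1 < k%:R.
  by exists (Num.bound (e^-1)); apply: archi_boundP; rewrite invr_ge0 ltW.
set n := (k + N.+1)%N.
have nk : (k <= 2 ^ n)%N by apply: leq_trans (leq_addr N.+1 k) (ltnW (ltn_expl _ (ltnSn 1))).
have nN : (N.+1 <= 2 ^ n)%N by apply: leq_trans (leq_addl k N.+1) (ltnW (ltn_expl _ (ltnSn 1))).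
have W := @window R x n xe; case/andP: W => _ W.
rewrite -Asum_pow (Asum_split x nN) in W.
have B1 := Asum_le1 (2 ^ n) h2.
rewrite (Asum_split (2^-1) nN) in B1.
have C : \sum_(N.+1 <= m < 2 ^ n) s_fn m x <= \sum_(N.+1 <= m < 2 ^ n) s_fn m (2^-1 : R).
  apply: ler_sum_nat => m /andP[Nm _]; apply: am_le_bm => //.
  by apply: leq_trans Nm.
have E : (2 ^+ n : R)^-1 <= e.
  have h : e^-1 < (2 ^+ n : R) by apply: lt_le_trans hk _; rewrite -natrX ler_nat.
  rewrite -[e]invrK; apply: ltW; rewrite ltf_pV2 ?posrE ?invr_gt0 ?exprn_gt0 //.
lra.
Qed.
End S7.


Section S8.
Variable R : realType.

Lemma tangent (y c r : R) : 1 <= r -> 0 <= y -> 0 <= c ->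
  c `^ r + r * c `^ (r - 1) * (y - c) <= y `^ r.
Proof.
move=> r1 y0 c0.
have [->|r1'] := eqVneq r 1.
  by rewrite subrr powRr0 !powRr1 // mul1r mul1r addrC subrK.
have r1s : 1 < r by rewrite lt_neqAle eq_sym r1' r1.
have r0 : 0 < r by lra.
have rm0 : 0 < r - 1 by lra.
pose q := r / (r - 1).
have q0 : 0 < q by rewrite /q divr_gt0.
have pq : r^-1 + q^-1 = 1 by rewrite /q invf_div; field; rewrite ?gt_eqF.
have Y := conjugate_powR y0 (powR_ge0 c (r - 1)) r0 q0 pq.
have bq : (c `^ (r - 1)) `^ q = c `^ r.
  by rewrite -powRrM /q mulrC divfK // gt_eqF.
rewrite bq in Y.
have cc : c * c `^ (r - 1) = c `^ r by rewrite mulr_powRB1.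
have Y2 : r * (y * c `^ (r - 1)) <= y `^ r + (r - 1) * c `^ r.
  have := ler_wpM2l (ltW r0) Y.
  have -> : r * (y `^ r / r + c `^ r / q) = y `^ r + (r - 1) * c `^ r.
    rewrite /q; field; rewrite ?gt_eqF //.
  by [].
have -> : c `^ r + r * c `^ (r - 1) * (y - c) = r * (y * c `^ (r - 1)) - (r - 1) * c `^ r.
  by rewrite -cc; ring.
lra.
Qed.

Lemma fin_maj (r : R) (a b : nat -> R) (N : nat) : 1 <= r ->
  (forall m, 0 <= a m) -> (forall m, 0 <= b m) ->
  (forall m, (1 <= m)%N -> a m <= b m) -> (forall m, b m <= b 0%N) ->
  \sum_(0 <= m < N) b m <= \sum_(0 <= m < N) a m ->
  \sum_(0 <= m < N) b m `^ r <= \sum_(0 <= m < N) a m `^ r.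
Proof.
move=> r1 a0 b0 ab bb S.
pose w := r * b 0%N `^ (r - 1).
have w0 : 0 <= w by rewrite /w mulr_ge0 ?powR_ge0 //; lra.
have T : forall m, b m `^ r + w * (a m - b m) <= a m `^ r.
  move=> [|m].
    exact: tangent.
  apply: (le_trans _ (tangent _ _ _ r1 (a0 m.+1) (b0 m.+1))).
  rewrite lerD2l /w -!mulrA ler_wpM2l //; first lra.
  have d : a m.+1 - b m.+1 <= 0 by rewrite subr_le0 ab.
  rewrite -[X in _ <= X]opprK -[X in X <= _]opprK lerN2 -!mulrN.
  apply: ler_wpM2r; first by rewrite oppr_ge0.
  by apply: ge0_ler_powR; rewrite ?nnegrE ?b0 //; lra.
have := ler_sum_nat (fun m (_ : (0 <= m < N)%N) => T m).
rewrite big_split /= -mulr_sumr sumrB.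
have : 0 <= w * (\sum_(0 <= i < N) a i - \sum_(0 <= i < N) b i).
  by rewrite mulr_ge0 // subr_ge0.
lra.
Qed.
End S8.


Theorem mainTheorem7 (R : realType) (r x : R) :
  1 <= r -> 0 <= x <= 1 ->
  ((\sum_(0 <= k <oo) (powR (s_fn k (2^-1 : R)) r)%:E
      <= \sum_(0 <= k <oo) (powR (s_fn k x) r)%:E)%E)
  /\ (forall m : nat, s_fn m (2^-1 : R) = 8 / (pi ^+ 2 * (2 * m%:R + 1) ^+ 2)).
Proof.
move=> r1 hx; split; last exact: s_half.
apply: series_le => [n|n|N]; try exact: powR_ge0.
apply: fin_maj => //.
- by move=> m; apply: s_ge0.
- by move=> m; apply: s_ge0.
- move=> m m1; case/andP: (hx) => x0 x1.
  case: (ltrP 0 x) => h; last first.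
    have -> : x = 0 by apply/eqP; rewrite eq_le h x0.
    by rewrite (@s_end R 0 m (or_introl erefl)); case: m m1 => // m _; apply: s_ge0.
  case: (ltrP x 1) => h'; last first.
    have -> : x = 1 by apply/eqP; rewrite eq_le x1 h'.
    by rewrite (@s_end R 1 m (or_intror erefl)); case: m m1 => // m _; apply: s_ge0.
  by apply: (@am_le_bm R) => //; apply/andP.
- move=> m; rewrite !s_half mulr0 add0r expr1n mulr1.
  have p0 : 0 < (pi : R) ^+ 2 by apply: exprn_gt0; apply: pi_gt0.
  have m0 := ler0n R m.
  have h : 1 <= (2 * m%:R + 1 : R) ^+ 2 by rewrite expr2; nra.
  have q0 : 0 < (2 * m%:R + 1 : R) ^+ 2 by lra.
  apply: ler_wpM2l => //.
  have pq : 0 < (pi : R) ^+ 2 * (2 * m%:R + 1) ^+ 2 by apply: mulr_gt0.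
  rewrite lef_pV2 ?posrE //.
  by rewrite ler_peMr // ltW.
- exact: (@Asum_ge R x N hx).
Qed.
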